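(* Let $q$ be odd. For every $c\in{\mathbb F}_q$, $$\prod\Big\{c-a: a\in{\mathbb F}_q,\ \left(\tfrac{a(a+4)}{q}\right)=1\Big\}+\prod\Big\{c-b: b\in{\mathbb F}_q,\ \left(\tfrac{b(b+4)}{q}\right)=-1\Big\}=\left(\frac{c}{q}\right).$$
   Context: $\left(\frac{a}{q}\right)$ denotes the Legendre symbol on ${\mathbb F}_q$: $1$ if $a$ is a nonzero square, $-1$ if a nonsquare, $0$ if $a=0$. Empty products equal $1$. *)

(* Defs.v *)
From HB Require Import structures.
From mathcomp Require Import all_boot all_order all_algebra all_field.
Set Implicit Arguments. Unset Strict Implicit. Unset Printing Implicit Defensive.
Import GRing.Theory.
Local Open Scope ring_scope.

Definition legendre (F : finFieldType) (a : F) : int :=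
  if a == 0 then 0
  else if [exists b : F, b ^+ 2 == a] then 1 else -1.

(* Main.v *)
Require Import Defs.
From HB Require Import structures.
From mathcomp Require Import all_boot all_order all_algebra all_field.
From mathcomp Require Import fingroup cyclic ring zify.
Set Implicit Arguments. Unset Strict Implicit. Unset Printing Implicit Defensive.
Import GRing.Theory.
Local Open Scope ring_scope.

Section L.
Variable F : finFieldType.

Lemma leg1 (x : F) : (legendre x == 1) = (x != 0) && [exists b : F, b ^+ 2 == x].
Proof.
rewrite /legendre; case: (x =P 0) => [->|/eqP nz]; rewrite ?eqxx /=; first by [].
by case: existsP.
Qed.

Lemma legN1 (x : F) : (legendre x == -1) = (x != 0) && ~~ [exists b : F, b ^+ 2 == x].
Proof.
rewrite /legendre; case: (x =P 0) => [->|/eqP nz]; rewrite ?eqxx /=; first by [].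
by case: existsP.
Qed.

Lemma leg0 (x : F) : (legendre x == 0) = (x == 0).
Proof.
rewrite /legendre; case: (x =P 0) => //= _.
by case: existsP.
Qed.

Lemma two_neq0 : odd #|F| -> (2 : F) != 0.
Proof.
move=> hodd; apply/negP => /eqP h2.
pose o : F := 1%R.
have h1 : (o ^+ 2)%g = 1%g by rewrite FinRing.zmodXgE FinRing.zmod1gE /o -h2.
have : (fingroup.order o %| 2)%N by rewrite order_dvdn h1.
have hd : (fingroup.order o %| #|F|)%N by rewrite -cardsT order_dvdG ?inE.
move=> h.
have hle := dvdn_leq (isT : (0 < 2)%N) h.
have ho1 : fingroup.order o != 1%N by rewrite order_eq1 FinRing.zmod1gE /o oner_eq0.
have ho : fingroup.order o = 2%N.
  move: hle ho1 (order_gt0 o); case: (fingroup.order o) => [|[|[|n]]] //.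
by move: hd; rewrite ho dvdn2 hodd.
Qed.
End L.

Lemma big_pair2 (R : Type) (idx : R) (op : Monoid.com_law idx) (T : finType)
  (P : pred T) (f : T -> R) u1 u2 : u1 != u2 ->
  (forall u, P u = (u == u1) || (u == u2)) ->
  \big[op/idx]_(u | P u) f u = op (f u1) (f u2).
Proof.
move=> ne hP; rewrite (bigD1 u1) ?hP ?eqxx //= (bigD1 u2) ?hP ?eqxx ?orbT 1?eq_sym //=.
rewrite big1 ?Monoid.mulm1 // => u; rewrite hP.
by case: (u == u1); case: (u == u2).
Qed.

Section M.
Variable F : finFieldType.
Hypothesis hodd : odd #|F|.

Definition Dp (u : F) := (u != 0) && (u ^+ 2 != 1).
Definition Sp (a : F) := legendre (a * (a + 4)) == 1.
Definition gp (u : F) := u + u^-1 - 2.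

Lemma gp_S u : Dp u -> Sp (gp u).
Proof.
case/andP => u0 u2; rewrite /Sp leg1 /gp.
have h : (u + u^-1 - 2) * (u + u^-1 - 2 + 4) = ((u ^+ 2 - 1) / u) ^+ 2.
  by field.
rewrite h expf_eq0 /= mulf_eq0 invr_eq0 subr_eq0 negb_or u2 u0 /=.
by apply/existsP; exists ((u ^+ 2 - 1) / u).
Qed.

Lemma fiber_S a : Sp a -> exists u0, exists w,
  [/\ u0 != w, u0 + w = a + 2, u0 * w = 1 &
   forall u, Dp u && (gp u == a) = (u == u0) || (u == w)].
Proof.
rewrite /Sp leg1 => /andP [nz /existsP [s /eqP hs]].
have t2 := two_neq0 hodd.
pose u0 := (a + 2 + s) / 2; pose w := (a + 2 - s) / 2.
have hsum : u0 + w = a + 2 by rewrite /u0 /w; field.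
have hprod : u0 * w = 1.
  rewrite /u0 /w; apply: (mulIf (mulf_neq0 t2 t2)).
  rewrite mul1r; have -> : (a + 2 + s) / 2 * ((a + 2 - s) / 2) * (2 * 2)
     = (a + 2) ^+ 2 - s ^+ 2 by field.
  rewrite hs; ring.
have s0 : s != 0 by apply: contraNneq nz => s0; rewrite -hs s0 expr0n.
have hne : u0 != w.
  apply: contraNneq s0 => e; rewrite /u0 /w in e.
  have : (a + 2 + s) / 2 * 2 - (a + 2 - s) / 2 * 2 = 0 by rewrite e subrr.
  have -> : (a + 2 + s) / 2 * 2 - (a + 2 - s) / 2 * 2 = 2 * s by field.
  by move/eqP; rewrite mulf_eq0 (negbTE t2) /=.
have u0nz : u0 != 0.
  by apply/eqP => h0; move/eqP: hprod; rewrite h0 mul0r eq_sym oner_eq0.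
have winv : u0^-1 = w by rewrite -[LHS]mulr1 -hprod mulrA mulVf // mul1r.
exists u0, w; split => // u.
apply/idP/idP.
  case/andP => /andP [un0 u2] /eqP gu.
  have : (u - u0) * (u - w) = 0.
    have -> : (u - u0) * (u - w) = u ^+ 2 - (u0 + w) * u + u0 * w by ring.
    rewrite hsum hprod -gu /gp; by field.
  by move/eqP; rewrite mulf_eq0 !subr_eq0.
have Dw : forall v, v * v^-1 = 1 -> v != v^-1 -> Dp v.
  move=> v h1 h2; apply/andP; split.
    by apply/eqP => h0; move/eqP: h1; rewrite h0 mul0r eq_sym oner_eq0.
  apply: contra h2 => /eqP h; apply/eqP; rewrite -[LHS]mulr1 -h1 mulrA -expr2 h mul1r.
  done.
case/orP => /eqP ->.
  rewrite Dw ?winv ?mulfV //= /gp winv hsum; last first.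
  by rewrite addrK.
have wnz : w != 0 by rewrite -winv invr_eq0.
have winv' : w^-1 = u0 by rewrite -winv invrK.
rewrite Dw /=; [| by rewrite mulfV | by rewrite winv' eq_sym].
rewrite /gp winv' [w + u0]addrC hsum.
by rewrite addrK.
Qed.

Lemma prodD_S : \prod_(u | Dp u) ('X - u%:P) =
  \prod_(a | Sp a) ('X^2 - (a + 2)%:P * 'X + 1) :> {poly F}.
Proof.
rewrite (partition_big gp Sp) /=; last exact: gp_S.
apply: eq_bigr => a Sa; have [u0 [w [ne hs hp hf]]] := fiber_S Sa.
rewrite (bigD1 u0); last by rewrite hf eqxx.
rewrite (bigD1 w); last by rewrite hf eqxx orbT eq_sym ne.
rewrite big1; last by move=> u; rewrite hf; case: (u == u0); case: (u == w).
rewrite -[LHS]/(('X - u0%:P) * (('X - w%:P) * 1)) mulr1.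
have -> : ('X - u0%:P) * ('X - w%:P) = 'X^2 - (u0%:P + w%:P) * 'X + u0%:P * w%:P :> {poly F}
  by ring.
by rewrite -polyCD -polyCM hs hp.
Qed.

Lemma cardD_S : #|Dp| = (2 * #|Sp|)%N.
Proof.
rewrite -[in LHS]sum1_card (partition_big gp Sp); last exact: gp_S.
rewrite (eq_bigr (fun _ => 2%N)); first by rewrite sum_nat_const mulnC.
move=> a Sa; have [u0 [w [ne hs hp hf]]] := fiber_S Sa.
rewrite (bigD1 u0); last by rewrite hf eqxx.
rewrite (bigD1 w); last by rewrite hf eqxx orbT eq_sym ne.
by rewrite big1 // => u; rewrite ?inE hf; case: (u == u0); by case: (u == w).
Qed.
End M.

Section C.
Variable F : finFieldType.
Hypothesis hodd : odd #|F|.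

Lemma neqs : [/\ (1 : F) != 0, (-1 : F) != 0 & (-1 : F) != 1].
Proof.
split; rewrite ?oppr_eq0 ?oner_eq0 //.
apply/negP => /eqP h; have := two_neq0 hodd; rewrite -[2]/(1 + 1 : F).
by rewrite -{1}h addNr eqxx.
Qed.

Lemma predDp (x : F) : (x != 0) && (x != 1) && (x != -1) = Dp x.
Proof. by rewrite /Dp sqrf_eq1 negb_or andbA. Qed.

Lemma genP1 : 'X^#|F| - 'X =
  (\prod_(u | Dp u) ('X - u%:P)) * ('X * ('X^2 - 1)) :> {poly F}.
Proof.
have [h1 h2 h3] := neqs.
rewrite finField_genPoly (bigD1 0) // (bigD1 1) /= ?h1 // (bigD1 (-1)) /= ?h2 ?h3 //.
rewrite (eq_bigl (fun x => Dp x)); last by move=> x; rewrite -predDp -!andbA.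
rewrite polyCN subr0 polyC1; ring.
Qed.

Lemma cardF : #|F| = (#|@Dp F| + 3)%N.
Proof.
have [h1 h2 h3] := neqs.
have -> : #|F| = (\sum_(x : F) 1)%N by rewrite sum1_card.
rewrite (bigD1 0) // (bigD1 1) /= ?h1 // (bigD1 (-1)) /= ?h2 ?h3 //.
rewrite (eq_bigl (fun x => Dp x)); last by move=> x; rewrite -predDp -!andbA.
by rewrite sum1_card; ring.
Qed.

Lemma genP2 : ('X - 1) ^+ #|F| = 'X^#|F| - 1 :> {poly F}.
Proof.
have h := finField_genPoly F.
have := congr1 (comp_poly ('X - 1)) h.
rewrite rmorphB rmorphXn /= comp_polyX rmorph_prod /=.
rewrite (eq_bigr (fun x => 'X - (x + 1)%:P)); last first.
  by move=> x _; rewrite comp_polyB comp_polyX comp_polyC polyCD; ring.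
have hr : \prod_x ('X - (x + 1)%:P) = \prod_x ('X - x%:P) :> {poly F}.
  by rewrite [RHS](reindex_inj (addIr (1 : F))).
rewrite hr -h => e.
by rewrite -[LHS](subrK ('X - 1)) e; ring.
Qed.
End C.

Section E.
Variable F : finFieldType.
Variable m : nat.
Hypothesis hq : #|F| = (2 * m + 1)%N.

Lemma hodd' : odd #|F|.
Proof. by rewrite hq addn1 /= oddM. Qed.

Lemma pow_q1 (x : F) : x != 0 -> x ^+ (2 * m) = 1.
Proof.
move=> nz; have := expf_card x; rewrite hq addn1 exprSr => e.
by apply: (mulIf nz); rewrite e mul1r.
Qed.

Definition Sq (x : F) := legendre x == 1.

Lemma card_sq : #|Sq| = m.
Proof.
have t2 := two_neq0 hodd'.
have h : (\sum_(x : F | x != 0%R) 1 = 2 * #|Sq|)%N.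
  rewrite (partition_big (fun x : F => x ^+ 2) Sq); last first.
    move=> x nz; rewrite /Sq leg1 expf_eq0 (negbTE nz) andbF /=.
    by apply/existsP; exists x.
  rewrite (eq_bigr (fun _ => 2%N)); first by rewrite sum_nat_const mulnC.
  move=> y; rewrite /Sq leg1 => /andP [ynz /existsP [b /eqP hb]].
  have bnz : b != 0 by apply: contraNneq ynz => b0; rewrite -hb b0 expr0n.
  have ne : b != - b.
    apply/negP => /eqP e; move: bnz; rewrite -[b]mul1r.
    have -> : 1 * b = b by rewrite mul1r.
    have : b + b = 0 by rewrite {2}e subrr.
    rewrite -mulr2n -mulr_natl => /eqP; rewrite mulf_eq0 (negbTE t2) /= => ->.
    by [].
  have hf : forall u, (u != 0) && (u ^+ 2 == y) = (u == b) || (u == - b).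
    move=> u; rewrite -hb eqf_sqr; apply/idP/idP; first by case/andP.
    case/orP => /eqP -> ; rewrite ?eqxx ?orbT ?andbT //.
    by rewrite oppr_eq0.
  rewrite (bigD1 b); last by rewrite hf eqxx.
  rewrite (bigD1 (- b)); last by rewrite hf eqxx orbT eq_sym ne.
  by rewrite big1 // => u; rewrite hf; case: (u == b); case: (u == - b).
have h2 : (1 + \sum_(x : F | x != 0%R) 1 = #|F|)%N.
  by rewrite -(sum1_card F) [RHS](bigD1 0%R).
move: h2; rewrite h hq addnC => /eqP; rewrite eqn_add2r eqn_mul2l /= => /eqP.
by [].
Qed.

Lemma euler (c : F) : c ^+ m = (legendre c)%:~R.
Proof.
have mgt0 : (0 < m)%N.
  have := finNzRing_gt1 F; rewrite hq; case: m => //.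
case: (c =P 0) => [->|/eqP cnz].
  by rewrite expr0n; case: m mgt0 => // n _; rewrite /legendre eqxx.
case: (boolP [exists b : F, b ^+ 2 == c]) => [/existsP [b /eqP hb]|ns].
  have bnz : b != 0 by apply: contraNneq cnz => b0; rewrite -hb b0 expr0n.
  rewrite /legendre (negbTE cnz) (_ : [exists b, _] = true); last first.
    by apply/existsP; exists b; rewrite hb.
  by rewrite -hb -exprM pow_q1.
rewrite /legendre (negbTE cnz) (negbTE ns).
have : (c ^+ m) ^+ 2 == 1 by rewrite -exprM mulnC pow_q1.
rewrite sqrf_eq1 => /orP [/eqP h1|/eqP ->]; last by [].
exfalso.
pose p : {poly F} := 'X^m - 1.
have pnz : p != 0 by rewrite -size_poly_eq0 size_Xn_sub_1.
have hr : all (root p) (c :: enum Sq).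
  apply/allP => x; rewrite inE mem_enum => /orP [/eqP ->|].
    by rewrite /root /p !hornerE h1 subrr.
  rewrite unfold_in /Sq leg1 => /andP [xnz /existsP [b /eqP hb]].
  have bnz : b != 0 by apply: contraNneq xnz => b0; rewrite -hb b0 expr0n.
  by rewrite /root /p !hornerE -hb -exprM pow_q1 // subrr.
have hu : uniq (c :: enum Sq).
  rewrite /= enum_uniq andbT mem_enum unfold_in /Sq leg1 negb_and ns orbT.
  by [].
have := max_poly_roots pnz hr hu.
by rewrite /= -cardE card_sq /p size_Xn_sub_1 // ltnn.
Qed.
End E.

Lemma alg (K : fieldType) (Y Q : K) (k : nat) : Y != 0 -> Y - 1 != 0 ->
  Y ^+ (2 * k + 3) - Y = Q * (Y * (Y ^+ 2 - 1)) ->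
  (Y - 1) ^+ (2 * k + 3) = Y ^+ (2 * k + 3) - 1 ->
  (Q / Y ^+ k) * (((Y - 1) ^+ 2 / Y) ^+ (k + 1) - Q / Y ^+ k) *
    (((Y - 1) ^+ 2 / Y) * (((Y - 1) ^+ 2 / Y) + 4))
  = ((Y - 1) ^+ 2 / Y) ^+ (2 * k + 3) - ((Y - 1) ^+ 2 / Y).
Proof.
move=> Y0 Y1 h1 h2.
set a := Y ^+ (k + 1); set b := (Y - 1) ^+ (k + 1).
have e3 : forall Z : K, Z ^+ (2 * k + 3) = Z * (Z ^+ (k + 1)) ^+ 2.
  move=> Z; have -> : (2 * k + 3 = (k + 1) * 2 + 1)%N by ring.
  by rewrite exprD -exprM expr1 mulrC.
have a0 : a != 0 by rewrite expf_neq0.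
have ek : Y ^+ k = a / Y by rewrite /a exprD expr1 mulfK.
have et : ((Y - 1) ^+ 2 / Y) ^+ (k + 1) = b ^+ 2 / a.
  by rewrite /a /b expr_div_n -!exprM mulnC.
move: h1 h2; rewrite !e3 -/a -/b et ek => h1 h2.
have ha : a ^+ 2 = Q * (Y ^+ 2 - 1) + 1.
  apply: (mulfI Y0).
  have -> : Y * a ^+ 2 = Q * (Y * (Y ^+ 2 - 1)) + Y by rewrite -h1 subrK.
  ring.
have hb : b ^+ 2 = Q * Y * (Y + 1) + 1.
  apply: (mulfI Y1); rewrite h2 ha; ring.
have -> : (Q / (a / Y)) * (b ^+ 2 / a - Q / (a / Y)) * ((Y - 1) ^+ 2 / Y * ((Y - 1) ^+ 2 / Y + 4))
   = Q * Y * (b ^+ 2 - Q * Y) * ((Y - 1) ^+ 2 * (Y + 1) ^+ 2) / (Y ^+ 2 * a ^+ 2).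
  by field; rewrite a0 Y0.
have -> : (Y - 1) ^+ 2 / Y * (b ^+ 2 / a) ^+ 2 - (Y - 1) ^+ 2 / Y
   = (Y - 1) ^+ 2 * ((b ^+ 2) ^+ 2 - a ^+ 2) / (Y * a ^+ 2).
  by field; rewrite a0 Y0.
have num : Q * Y * (b ^+ 2 - Q * Y) * ((Y - 1) ^+ 2 * (Y + 1) ^+ 2)
   = (Y - 1) ^+ 2 * ((b ^+ 2) ^+ 2 - a ^+ 2) * Y.
  by rewrite hb ha; ring.
rewrite num; field.
by rewrite a0 Y0.
Qed.

Section H.
Variable F : fieldType.
Local Notation K := {fraction {poly F}}.
Definition io : {rmorphism F -> K} := ((@tofrac _) \o polyC).
Definition YY : K := tofrac 'X.
Definition tt : K := (YY - 1) ^+ 2 / YY.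
Definition evm : {rmorphism {poly F} -> K} := horner_eval tt \o map_poly io.

Lemma evmE p : evm p = (map_poly io p).[tt]. Proof. by []. Qed.
Lemma evmX : evm 'X = tt. Proof. by rewrite evmE map_polyX hornerX. Qed.
Lemma evmC c : evm c%:P = io c. Proof. by rewrite evmE map_polyC hornerC. Qed.

Lemma YY0 : YY != 0. Proof. by rewrite /YY tofrac_eq0 polyX_eq0. Qed.
Lemma YY1 : YY - 1 != 0.
Proof. by rewrite /YY -tofrac1 -tofracB tofrac_eq0 -polyC1 polyXsubC_eq0. Qed.

Lemma ioE c : io c = tofrac (c%:P). Proof. by []. Qed.

Lemma evm_inj p : evm p = 0 -> p = 0.
Proof.
move=> h; apply/eqP; apply: contraTT isT => pnz.
pose d := (size p).-1.
have sp : size p = d.+1 by rewrite /d prednK // size_poly_gt0.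
pose H := \sum_(i < size p) p`_i *: (('X - 1) ^+ (2 * i) * 'X ^+ (d - i)) : {poly F}.
have hH : tofrac H = YY ^+ d * evm p.
  rewrite evmE horner_coef size_map_poly rmorph_sum mulr_sumr; apply: eq_bigr => i _.
  rewrite coef_map -mul_polyC !rmorphM !rmorphXn rmorphB rmorph1.
  rewrite -[X in (X - 1) ^+ _]/YY -[X in X ^+ (d - i)]/YY.
  rewrite [RHS]mulrCA; congr (_ * _).
  have hi : (i <= d)%N by rewrite -ltnS -sp.
  rewrite -[in YY ^+ d](subnK hi) exprD /tt expr_div_n -exprM.
  rewrite -mulrA [YY ^+ i * _]mulrCA mulfV ?expf_neq0 ?YY0 // mulr1 mulrC.
  by [].
have sH : size H = (2 * d).+1.
  rewrite /H sp big_ord_recr /= subnn expr0 mulr1 addrC size_polyDl.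
    rewrite size_scale; last by rewrite -lead_coefE lead_coef_eq0.
    by rewrite -polyC1 size_exp_XsubC.
  rewrite size_scale; last by rewrite -lead_coefE lead_coef_eq0.
  rewrite -polyC1 size_exp_XsubC ltnS.
  apply: (leq_trans (size_sum _ _ _)).
  apply/bigmax_leqP => i _.
  apply: (leq_trans (size_scale_leq _ _)).
  apply: (leq_trans (size_mul_leq _ _)).
  rewrite size_exp_XsubC size_polyXn.
  have := ltn_ord i; move: (nat_of_ord i) => j hj.
  lia.
have H0 : H != 0 by rewrite -size_poly_eq0 sH.
move: H0; rewrite -tofrac_eq0 hH h mulr0 eqxx.
by [].
Qed.



Lemma tofracQ (P : {poly F}) : tofrac P = tofrac P. Proof. by []. Qed.
End H.

Lemma quadE (F : fieldType) (a : F) : tofrac ('X^2 - (a + 2)%:P * 'X + 1) =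
  YY F ^+ 2 - (io F a + 2) * YY F + 1.
Proof.
rewrite tofracD tofracB tofrac1 !tofracM polyCD tofracD polyC_natr tofracMn tofrac1 expr2.
reflexivity.
Qed.

Lemma quad_alg (K : fieldType) (Y x : K) : Y != 0 ->
  (Y - 1) ^+ 2 / Y - x = (Y ^+ 2 - (x + 2) * Y + 1) / Y.
Proof. by move=> Y0; field. Qed.

Lemma legcases (F : finFieldType) (x : F) :
  [|| legendre x == 1, legendre x == -1 | legendre x == 0].
Proof. by rewrite /legendre; case: ifP => _ //; case: ifP. Qed.

Theorem corollary7p5 (F : finFieldType) (hodd : odd #|F|) (c : F) :
  \prod_(a : F | legendre (a * (a + 4)) == 1) (c - a)
  + \prod_(b : F | legendre (b * (b + 4)) == -1) (c - b)
  = (legendre c)%:~R.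
Proof.
set k := #|@Sp F|.
have hq : #|F| = (2 * k + 3)%N by rewrite (cardF hodd) (cardD_S hodd).
have hq' : #|F| = (2 * (k + 1) + 1)%N by rewrite hq; lia.
pose PS := \prod_(a | Sp a) ('X - a%:P) : {poly F}.
pose PN := \prod_(b : F | legendre (b * (b + 4)) == -1) ('X - b%:P) : {poly F}.
pose PZ := \prod_(z : F | legendre (z * (z + 4)) == 0) ('X - z%:P) : {poly F}.
have t2 := two_neq0 hodd.
have hZ : PZ = 'X * ('X + 4%:P).
  have ne : (0 : F) != -4.
    rewrite eq_sym oppr_eq0; have -> : (4 : F) = 2 * 2 by rewrite -natrM.
    by rewrite mulf_neq0.
  have hf : forall z : F, (legendre (z * (z + 4)) == 0) = (z == 0) || (z == -4).
    by move=> z; rewrite leg0 mulf_eq0 addr_eq0.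
  rewrite /PZ (bigD1 0); last by rewrite hf eqxx.
  rewrite (bigD1 (-4)); last by rewrite hf eqxx orbT eq_sym ne.
  rewrite big1; last by move=> z; rewrite hf; case: (z == 0); case: (z == -4).
  rewrite -[LHS]/(('X - 0%:P) * (('X - (-4)%:P) * 1)) mulr1 subr0 polyCN opprK.
  by rewrite (rmorph_nat (@polyC F) 4).
have hfull : 'X^#|F| - 'X = PS * PN * PZ.
  pose L := fun x : F => legendre (x * (x + 4)).
  have e1 : \prod_x ('X - x%:P) = PS * \prod_(x | ~~ (L x == 1)) ('X - x%:P) :> {poly F}.
    by rewrite (bigID (fun x : F => L x == 1)).
  have e2 : \prod_(x | ~~ (L x == 1)) ('X - x%:P) =
     \prod_(x | ~~ (L x == 1) && (L x == -1)) ('X - x%:P) *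
     \prod_(x | ~~ (L x == 1) && ~~ (L x == -1)) ('X - x%:P) :> {poly F}.
    by rewrite (bigID (fun x : F => L x == -1)).
  rewrite finField_genPoly e1 e2 -mulrA.
  congr (_ * (_ * _)); apply: eq_bigl => x.
    by case/or3P: (legcases (x * (x + 4))) => /eqP; rewrite /L => ->.
  by case/or3P: (legcases (x * (x + 4))) => /eqP; rewrite /L => ->.
pose Q := \prod_(u | Dp u) ('X - u%:P) : {poly F}.
have ePS : evm F PS = tofrac Q / YY F ^+ k.
  rewrite /PS rmorph_prod /Q (prodD_S hodd) rmorph_prod.
  rewrite -prodr_const -prodf_div; apply: eq_bigr => a _.
  rewrite evmE map_polyXsubC hornerXsubC.
  rewrite -[X in _ = X / _]/(tofrac ('X^2 - (a + 2)%:P * 'X + 1)) quadE /tt.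
  exact: quad_alg (YY0 F).
have h1 : YY F ^+ #|F| - YY F = tofrac Q * (YY F * (YY F ^+ 2 - 1)).
  have := congr1 (@tofrac _) (genP1 hodd).
  by rewrite tofracB !tofracM tofracB !tofracXn tofrac1.
have h2 : (YY F - 1) ^+ #|F| = YY F ^+ #|F| - 1.
  have := congr1 (@tofrac _) (genP2 F).
  by rewrite tofracXn !tofracB tofracXn tofrac1.
have ePZ : evm F PZ = tt F * (tt F + 4).
  rewrite hZ rmorphM rmorphD evmX evmC rmorph_nat.
  by [].
have key : PS * ('X ^+ (k + 1) - PS) * PZ = 'X^#|F| - 'X.
  apply/eqP; rewrite -subr_eq0; apply/eqP; apply: (@evm_inj F).
  rewrite rmorphB !rmorphM ePZ (rmorphB (evm F) ('X^(k + 1)) PS).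
  rewrite (rmorphB (evm F) ('X^#|F|) 'X) !rmorphXn evmX ePS hq.
  rewrite hq in h1 h2; apply/eqP; rewrite subr_eq0; apply/eqP.
  exact: alg (YY0 F) (YY1 F) h1 h2.
have PSnz : PS != 0 by apply: monic_neq0; apply: monic_prod_XsubC.
have PZnz : PZ != 0 by apply: monic_neq0; apply: monic_prod_XsubC.
have eN : 'X ^+ (k + 1) - PS = PN.
  apply: (mulfI PSnz); apply: (mulIf PZnz); by rewrite key hfull.
have e := congr1 (fun p => p.[c]) eN.
rewrite /= hornerD hornerN hornerXn in e.
have ePSc : PS.[c] = \prod_(a : F | legendre (a * (a + 4)) == 1) (c - a).
  by rewrite /PS horner_prod; apply: eq_bigr => a _; rewrite hornerXsubC.
have ePNc : PN.[c] = \prod_(b : F | legendre (b * (b + 4)) == -1) (c - b).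
  by rewrite /PN horner_prod; apply: eq_bigr => a _; rewrite hornerXsubC.
rewrite -ePSc -ePNc -e -(euler hq'); ring.
Qed.
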